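(* Consider the following model. Fix $n\ge 1$, a vector $\mu\in\mathbb R^n$, $n\times n$ matrices $A,B,C$, a positive definite initial covariance matrix $\Sigma_0$, and an initial price vector $\vec S_0=(S_0^1,\dots,S_0^n)^\top$ with positive entries. Returns and covariances evolve by $$R_{t+1}=\mu+Z_{t+1},\qquad \Sigma_{t+1}=CC^\top+A\Sigma_tA^\top+BZ_{t+1}Z_{t+1}^\top B^\top,$$ where, conditionally on the past, $Z_{t+1}$ has mean $0$ and covariance $\Sigma_t$. Prices evolve by $S^i_{t+1}=h(S^i_t,R^i_{t+1})$ for $1\le i\le n$, for a given function $h$. Set $\Psi_t=\mathrm{diag}(\vec S_t)$ and $P_t=\Psi_t\Sigma_t\Psi_t$. Let $\gamma>0$, $\epsilon>0$, and let $q:\mathbb R^n\times\mathbb R^{n\times n}\to\mathbb R^+$ be a given function. Define $\widetilde P_t=\frac{\gamma}{\epsilon q(\vec S_t,P_t)}P_t$. Assume: (i) $C$ has full rank, so that $c:=\inf_{\|v\|=1}v^\top CC^\top v>0$; (ii) $\|h\|_\infty=\sup_{s,r}|h(s,r)|<\infty$, and there is a constant $\underline s>0$ with $\inf_{s,r}h(s,r)\ge \underline s$; (iii) there is a constant $\chi<\infty$ with $1\le q(s,p)\le\chi$ for all $(s,p)\in\mathbb R^n\times\mathbb R^{n\times n}$. If $\epsilon\chi\|h\|_\infty<\gamma\underline s^2c$, then, writing $\kappa=\chi\|h\|_\infty/(\gamma\underline s^2c)$, $$\sup_t\left\|\left(I+\widetilde P_t\Psi_t^{-1}\right)^{-1}\right\|\le\frac{\epsilon\kappa}{1-\epsilon^2\kappa^2}.$$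 Consequently, for any $\delta\in[0,1)$ and all $\epsilon>0$ small enough, there is a constant $\Delta(\epsilon)<1$ such that $\delta\|(I+\widetilde P_t\Psi_t^{-1})^{-1}\|\le\Delta(\epsilon)$ for all $t$.
   Context: $\|\cdot\|$ denotes the Euclidean norm on vectors and the induced operator (spectral) norm on matrices. $\mathrm{diag}(\vec S_t)$ is the diagonal matrix whose diagonal entries are the entries of $\vec S_t$. *)

(* Defs.v *)
From HB Require Import structures.
From mathcomp Require Import all_boot all_order all_algebra.
From mathcomp Require Import all_classical all_reals.
Set Implicit Arguments. Unset Strict Implicit. Unset Printing Implicit Defensive.
Import Order.TTheory GRing.Theory Num.Theory.
Local Open Scope ring_scope.
Local Open Scope classical_set_scope.

Definition vnorm (R : realType) (n : nat) (v : 'cV[R]_n) : R :=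
  Num.sqrt (\sum_(i < n) (v i 0) ^+ 2).

Definition opnorm (R : realType) (n : nat) (M : 'M[R]_n) : R :=
  sup [set vnorm (M *m v) | v in [set v : 'cV[R]_n | vnorm v = 1]].

Definition qform (R : realType) (n : nat) (M : 'M[R]_n) (v : 'cV[R]_n) : R :=
  (v^T *m M *m v) 0 0.

Definition posdef (R : realType) (n : nat) (M : 'M[R]_n) : Prop :=
  M^T = M /\ forall v : 'cV[R]_n, v != 0 -> 0 < qform M v.

Definition cinf (R : realType) (n : nat) (C : 'M[R]_n) : R :=
  inf [set qform (C *m C^T) v | v in [set v : 'cV[R]_n | vnorm v = 1]].

Definition hsup (R : realType) (h : R -> R -> R) : R :=
  sup [set `|h sr.1 sr.2| | sr in [set: R * R]].

Fixpoint Sig (R : realType) (n : nat) (A B C Sig0 : 'M[R]_n)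
    (Z : nat -> 'cV[R]_n) (t : nat) : 'M[R]_n :=
  match t with
  | 0 => Sig0
  | t'.+1 => C *m C^T + A *m Sig A B C Sig0 Z t' *m A^T
             + B *m Z t *m (Z t)^T *m B^T
  end.

Fixpoint Sp (R : realType) (n : nat) (mu S0 : 'cV[R]_n) (h : R -> R -> R)
    (Z : nat -> 'cV[R]_n) (t : nat) : 'cV[R]_n :=
  match t with
  | 0 => S0
  | t'.+1 => \col_i h (Sp mu S0 h Z t' i 0) ((mu + Z t) i 0)
  end.

Definition Psi (R : realType) (n : nat) (S : 'cV[R]_n) : 'M[R]_n := diag_mx S^T.

Definition Pmat (R : realType) (n : nat) (S : 'cV[R]_n) (Sg : 'M[R]_n) : 'M[R]_n :=
  Psi S *m Sg *m Psi S.

Definition Ptilde (R : realType) (n : nat) (gamma eps : R)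
    (q : 'cV[R]_n -> 'M[R]_n -> R) (S : 'cV[R]_n) (Sg : 'M[R]_n) : 'M[R]_n :=
  (gamma / (eps * q S (Pmat S Sg))) *: Pmat S Sg.

Definition Minv (R : realType) (n : nat) (gamma eps : R)
    (q : 'cV[R]_n -> 'M[R]_n -> R) (S : 'cV[R]_n) (Sg : 'M[R]_n) : 'M[R]_n :=
  invmx (1%:M + Ptilde gamma eps q S Sg *m invmx (Psi S)).

(* Main.v *)
Require Import Defs.
From HB Require Import structures.
From mathcomp Require Import all_boot all_order all_algebra.
From mathcomp Require Import all_classical all_reals.
From mathcomp Require Import ring lra.
Import Order.TTheory GRing.Theory Num.Theory.
Local Open Scope ring_scope.
Local Open Scope classical_set_scope.

Section Aux.
Variable R : realType.

Lemma CS n (a b : 'I_n -> R) :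
  (\sum_i a i * b i) ^+ 2 <= (\sum_i a i ^+ 2) * (\sum_i b i ^+ 2).
Proof.
set A := \sum_i a i ^+ 2; set B := \sum_i b i ^+ 2; set S := \sum_i a i * b i.
have E : \sum_i (A * b i - S * a i) ^+ 2 = A * (A * B - S ^+ 2).
  have E1 i : (A * b i - S * a i) ^+ 2
     = A ^+ 2 * b i ^+ 2 - (2 * A * S) * (a i * b i) + S ^+ 2 * a i ^+ 2 by ring.
  rewrite (eq_bigr _ (fun i _ => E1 i)) big_split sumrB /= -!mulr_sumr -/A -/B -/S.
  ring.
have A0 : 0 <= A by apply: sumr_ge0 => i _; exact: sqr_ge0.
have [Az|Ap] := eqVneq A 0.
  have a0 i : a i = 0.
    apply/eqP; rewrite -sqrf_eq0; apply/eqP.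
    by apply: (psumr_eq0P (P := xpredT) (F := fun i => a i ^+ 2)) => // j _; exact: sqr_ge0.
  have -> : S = 0 by rewrite /S big1 // => i _; rewrite a0 mul0r.
  by rewrite Az expr0n /= mul0r.
have Ag : 0 < A by rewrite lt_def Ap A0.
have : 0 <= A * (A * B - S ^+ 2) by rewrite -E; apply: sumr_ge0 => i _; exact: sqr_ge0.
rewrite pmulr_rge0 // subr_ge0 => H; lra.
Qed.

Definition sqn n (v : 'cV[R]_n) := \sum_i (v i 0) ^+ 2.
Arguments sqn {n}.

Lemma sqn_ge0 n (v : 'cV[R]_n) : 0 <= sqn v.
Proof. by apply: sumr_ge0 => i _; exact: sqr_ge0. Qed.

Arguments sqn_ge0 {n}.

Lemma sqn_eq0 n (v : 'cV[R]_n) : sqn v = 0 -> v = 0.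
Proof.
move=> H; apply/matrixP => i j; rewrite (ord1 j) mxE.
apply/eqP; rewrite -sqrf_eq0; apply/eqP.
by apply: (psumr_eq0P (P := xpredT) (F := fun i => v i 0 ^+ 2)) => // k _; exact: sqr_ge0.
Qed.

Arguments sqn_eq0 {n}.

Lemma qform_expand n (M : 'M[R]_n) v :
  qform M v = \sum_i v i 0 * (M *m v) i 0.
Proof. by rewrite /qform -mulmxA mxE; apply: eq_bigr => i _; rewrite mxE. Qed.

Lemma qform_MMT n m (C : 'M[R]_(n, m)) (v : 'cV[R]_n) :
  qform (C *m C^T) v = sqn (C^T *m v).
Proof.
rewrite /qform /sqn.
have -> : v^T *m (C *m C^T) *m v = (C^T *m v)^T *m (C^T *m v).
  by rewrite trmx_mul trmxK !mulmxA.
by rewrite mxE; apply: eq_bigr => i _; rewrite mxE expr2.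
Qed.

Lemma qformD n (M1 M2 : 'M[R]_n) v : qform (M1 + M2) v = qform M1 v + qform M2 v.
Proof. by rewrite /qform mulmxDr mulmxDl mxE. Qed.

Lemma qform_conj n (A S : 'M[R]_n) v : qform (A *m S *m A^T) v = qform S (A^T *m v).
Proof. by rewrite /qform trmx_mul trmxK !mulmxA. Qed.

Lemma qform0 n (M : 'M[R]_n) : qform M 0 = 0.
Proof. by rewrite /qform mulmx0 mxE. Qed.


Lemma key n (S : 'cV[R]_n) (Sg : 'M[R]_n) (a c slow : R) :
  0 < slow -> (forall i, slow <= S i 0) -> 0 < c ->
  (forall w, c * sqn w <= qform Sg w) -> 0 < a ->
  forall w, (a * c * slow) ^+ 2 * sqn w <= sqn ((1%:M + a *: (Psi S *m Sg)) *m w).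
Proof.
move=> s0 sS c0 hSg a0 w.
set u := (1%:M + a *: (Psi S *m Sg)) *m w.
have Spos i : 0 < S i 0 by apply: lt_le_trans (sS i).
have ue i : u i 0 = w i 0 + a * S i 0 * (Sg *m w) i 0.
  rewrite /u mulmxDl mul1mx -scalemxAl -mulmxA /Psi mul_diag_mx !mxE.
  by rewrite mulrA.
pose y := \col_i (u i 0 / S i 0).
have dotE : \sum_i w i 0 * y i 0 = \sum_i (w i 0 ^+ 2 / S i 0) + a * qform Sg w.
  rewrite qform_expand mulr_sumr -big_split /=; apply: eq_bigr => i _.
  rewrite mxE ue; field; exact: lt0r_neq0.
have dot_ge : a * c * sqn w <= \sum_i w i 0 * y i 0.
  rewrite dotE -mulrA; apply: ler_wpDl.
    apply: sumr_ge0 => i _; apply: divr_ge0; [exact: sqr_ge0|exact: ltW].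
  by rewrite ler_pM2l.
have yle : sqn y <= sqn u / slow ^+ 2.
  rewrite /sqn mulr_suml; apply: ler_sum => i _; rewrite mxE expr_div_n.
  apply: ler_wpM2l; first exact: sqr_ge0.
  rewrite lef_pV2 ?posrE ?exprn_gt0 //.
  by rewrite ler_pXn2r // ?nnegrE ltW.
have cs := @CS n (fun i => w i 0) (fun i => y i 0).
have sw := sqn_ge0 w.
have su := sqn_ge0 u.
have sy := sqn_ge0 y.
have k0 : 0 <= a * c * sqn w by rewrite !mulr_ge0 // ltW.
have sq1 : (a * c * sqn w) ^+ 2 <= sqn w * sqn y.
  apply: le_trans cs; rewrite /sqn.
  by rewrite ler_pXn2r // ?nnegrE // (le_trans k0 dot_ge).
have [w0|wp] := eqVneq (sqn w) 0.
  by rewrite w0 mulr0.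
have wg : 0 < sqn w by rewrite lt_def wp sw.
have : (a * c) ^+ 2 * sqn w <= sqn y.
  rewrite -(ler_pM2l wg); apply: le_trans sq1; rewrite le_eqVlt; apply/orP; left; apply/eqP; ring.
move=> H1.
have H2 : (a * c) ^+ 2 * sqn w <= sqn u / slow ^+ 2 by apply: le_trans yle.
rewrite ler_pdivlMr ?exprn_gt0 // in H2.
apply: le_trans H2; rewrite le_eqVlt; apply/orP; left; apply/eqP; ring.
Qed.


Lemma inj_unit n (X : 'M[R]_n) : (forall w : 'cV[R]_n, X *m w = 0 -> w = 0) -> X \in unitmx.
Proof.
move=> Hi; rewrite -unitmx_tr -row_free_unit -kermx_eq0; apply/eqP/row_matrixP => i.
rewrite row0.
have : (row i (kermx X^T) <= kermx X^T)%MS by exact: row_sub.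
move/sub_kermxP => H.
have : X *m (row i (kermx X^T))^T = 0.
  by have := congr1 trmx H; rewrite trmx_mul trmxK trmx0.
move/Hi => /(congr1 trmx); rewrite trmxK trmx0; exact.
Qed.

Lemma Sig_psd n (A B C Sig0 : 'M[R]_n) Z : posdef Sig0 ->
  forall t v, 0 <= qform (Sig A B C Sig0 Z t) v.
Proof.
move=> [_ pd]; elim=> [|t IH] v /=.
  have [->|nz] := eqVneq v 0; first by rewrite qform0.
  exact: ltW (pd v nz).
rewrite !qformD qform_MMT qform_conj.
have -> : B *m Z t.+1 *m (Z t.+1)^T *m B^T = (B *m Z t.+1) *m (B *m Z t.+1)^T.
  by rewrite trmx_mul !mulmxA.
by rewrite qform_MMT !addr_ge0 // sqn_ge0.
Qed.

Lemma Sig_ge n (A B C Sig0 : 'M[R]_n) Z : posdef Sig0 ->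
  forall t v, qform (C *m C^T) v <= qform (Sig A B C Sig0 Z t.+1) v.
Proof.
move=> pd t v /=.
rewrite !qformD -addrA lerDl qform_conj.
have -> : B *m Z t.+1 *m (Z t.+1)^T *m B^T = (B *m Z t.+1) *m (B *m Z t.+1)^T.
  by rewrite trmx_mul !mulmxA.
by rewrite qform_MMT addr_ge0 // ?sqn_ge0 // Sig_psd.
Qed.

Lemma Sp_ge n (mu S0 : 'cV[R]_n) h Z slow : (forall s r, slow <= h s r) ->
  forall t i, slow <= Sp mu S0 h Z t.+1 i 0.
Proof. by move=> hs t i /=; rewrite mxE. Qed.

Lemma qformZ n (M : 'M[R]_n) k v : qform M (k *: v) = k ^+ 2 * qform M v.
Proof. by rewrite /qform -scalemxAr [(k *: v)^T]linearZ /= -!scalemxAl !mxE mulrA expr2. Qed.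

Lemma sqnZ n k (v : 'cV[R]_n) : sqn (k *: v) = k ^+ 2 * sqn v.
Proof. by rewrite /sqn mulr_sumr; apply: eq_bigr => i _; rewrite mxE exprMn. Qed.

Lemma cinf_le n (C : 'M[R]_n) w : cinf C * sqn w <= qform (C *m C^T) w.
Proof.
have [w0|wp] := eqVneq (sqn w) 0.
  by rewrite w0 mulr0 (sqn_eq0 w w0) qform0.
have wg : 0 < sqn w by rewrite lt_def wp sqn_ge0.
set r := Num.sqrt (sqn w).
have rg : 0 < r by rewrite sqrtr_gt0.
have r2 : r ^+ 2 = sqn w by rewrite sqr_sqrtr // ltW.
have : cinf C <= qform (C *m C^T) (r^-1 *: w).
  apply: ge_inf.
    exists 0 => x [v _ <-]; rewrite qform_MMT; exact: sqn_ge0.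
  exists (r^-1 *: w) => //=.
  rewrite /vnorm -/(sqn _) sqnZ exprVn r2 mulVf //; exact: sqrtr1.
rewrite qformZ exprVn r2 => H.
rewrite -ler_pdivlMr // mulrC; exact: H.
Qed.

Lemma unit_ex n : (0 < n)%N -> exists e : 'cV[R]_n, vnorm e = 1.
Proof.
case: n => // n _.
exists (\col_i (i == ord0)%:R).
rewrite /vnorm (bigD1 ord0) //= big1 => [|i /negbTE Hi]; last by rewrite mxE Hi expr0n.
by rewrite mxE eqxx expr1n addr0 sqrtr1.
Qed.

Lemma vnorm1 n (v : 'cV[R]_n) : vnorm v = 1 -> sqn v = 1.
Proof.
move=> H; rewrite -(sqr_sqrtr (sqn_ge0 v)) -/(sqn v).
by rewrite /vnorm in H; rewrite -/(sqn v) in H; rewrite H expr1n.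
Qed.

Lemma cinf_gt0 n (C : 'M[R]_n) : (0 < n)%N -> \rank C = n -> 0 < cinf C.
Proof.
move=> n0 rk.
have Cu : C^T \in unitmx by rewrite unitmx_tr -row_free_unit /row_free rk.
set D := invmx C^T.
set K := \sum_i \sum_j D i j ^+ 2.
have K0 : 0 <= K by apply: sumr_ge0 => i _; apply: sumr_ge0 => j _; exact: sqr_ge0.
have : (K + 1)^-1 <= cinf C.
  apply: lb_le_inf.
    have [e he] := @unit_ex n n0.
    by exists (qform (C *m C^T) e); exists e.
  move=> x [v /= hv <-].
  rewrite qform_MMT; set y := C^T *m v.
  have vy : v = D *m y by rewrite /y mulmxA mulVmx // mul1mx.
  have : sqn v <= K * sqn y.
    rewrite /K mulr_suml; apply: ler_sum => i _.
    rewrite {1}vy mxE.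
    exact: (@CS n (fun j => D i j) (fun j => y j 0)).
  rewrite vnorm1 // => H1.
  have sy := sqn_ge0 y.
  rewrite -div1r ler_pdivrMr; last by lra.
  nra.
apply: lt_le_trans; rewrite invr_gt0; lra.
Qed.
End Aux.
Arguments sqn {R n}.
Arguments sqn_ge0 {R n}.
Arguments sqn_eq0 {R n}.
Arguments cinf_le {R n}.
Arguments key {R n S Sg a c slow}.

Theorem proposition1 (R : realType) (n : nat) (mu : 'cV[R]_n)
  (A B C Sig0 : 'M[R]_n) (S0 : 'cV[R]_n) (h : R -> R -> R)
  (q : 'cV[R]_n -> 'M[R]_n -> R) (gamma chi slow : R)
  (Z : nat -> 'cV[R]_n) :
  (0 < n)%N ->
  posdef Sig0 ->
  (forall i, 0 < S0 i 0) ->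
  0 < gamma ->
  (* (i) C has full rank *)
  \rank C = n ->
  (* (ii) h bounded, and bounded below by slow > 0 *)
  has_ubound [set `|h sr.1 sr.2| | sr in [set: R * R]] ->
  0 < slow -> (forall s r, slow <= h s r) ->
  (* (iii) 1 <= q <= chi *)
  (forall s p, 1 <= q s p <= chi) ->
  let c := cinf C in
  let H := hsup h in
  let kappa := chi * H / (gamma * slow ^+ 2 * c) in
  let M eps t := Minv gamma eps q (Sp mu S0 h Z t) (Sig A B C Sig0 Z t) in
  (forall eps, 0 < eps -> eps * chi * H < gamma * slow ^+ 2 * c ->
     forall t, (1 <= t)%N ->
       opnorm (M eps t) <= eps * kappa / (1 - eps ^+ 2 * kappa ^+ 2))
  /\
  (forall delta, 0 <= delta < 1 ->
     exists eps0, 0 < eps0 /\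
       forall eps, 0 < eps < eps0 ->
         exists Delta, Delta < 1 /\
           forall t, (1 <= t)%N -> delta * opnorm (M eps t) <= Delta).
Proof.
move=> n0 pd S0p g0 rk hub s0 hs hq c H kappa M.
have c0 : 0 < c by exact: cinf_gt0.
have Hs : slow <= H.
  apply: le_trans (hs 0 0) _; apply: le_trans (ler_norm _) _.
  by apply: (ub_le_sup hub); exists (0, 0).
have chi1 : 1 <= chi by case/andP: (hq 0 0) => h1 h2; apply: le_trans h2.
have den0 : 0 < gamma * slow ^+ 2 * c by rewrite !mulr_gt0 // exprn_gt0.
have kappa0 : 0 < kappa by rewrite /kappa divr_gt0 // mulr_gt0 //; lra.
have P1 : forall eps, 0 < eps -> eps * chi * H < gamma * slow ^+ 2 * c ->
     forall t, (1 <= t)%N ->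
       opnorm (M eps t) <= eps * kappa / (1 - eps ^+ 2 * kappa ^+ 2).
  move=> eps e0 hyp [//|t] _.
  rewrite /M /Minv.
  set S := Sp mu S0 h Z t.+1; set Sg := Sig A B C Sig0 Z t.+1.
  set qv := q S (Pmat S Sg).
  have [q1 qchi] : 1 <= qv /\ qv <= chi by move: (hq S (Pmat S Sg)) => /andP.
  set a := gamma / (eps * qv).
  have a0 : 0 < a by rewrite /a divr_gt0 // mulr_gt0 //; lra.
  have Sge : forall i, slow <= S i 0 by move=> i; exact: Sp_ge.
  have Sgb : forall w, c * sqn w <= qform Sg w.
    by move=> w; apply: le_trans (cinf_le C w) _; exact: Sig_ge.
  have Pu : Psi S \in unitmx.
    rewrite unitmxE det_diag unitfE; apply: lt0r_neq0; apply: prodr_gt0 => i _.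
    by rewrite mxE; apply: lt_le_trans (Sge i).
  set X := 1%:M + a *: (Psi S *m Sg).
  have -> : 1%:M + Ptilde gamma eps q S Sg *m invmx (Psi S) = X.
    by rewrite /X /Ptilde -/qv -/a -scalemxAl /Pmat -mulmxA mulmxV // mulmx1.
  have kX := key s0 Sge c0 Sgb a0.
  have acs0 : 0 < a * c * slow by apply: mulr_gt0 => //; apply: mulr_gt0.
  have Xu : X \in unitmx.
    apply: inj_unit => w Xw; apply: sqn_eq0; have := kX w; rewrite -/X Xw.
    have -> : sqn (0 : 'cV[R]_n) = 0 by rewrite /sqn big1 // => i _; rewrite mxE expr0n.
    have := sqn_ge0 w; have : 0 < (a * c * slow) ^+ 2 by rewrite exprn_gt0.
    nra.
  set k := eps * kappa.
  have k0 : 0 <= k by rewrite /k mulr_ge0 // ltW.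
  have k1 : k < 1.
    rewrite /k /kappa mulrA ltr_pdivrMr // mul1r; by rewrite mulrA.
  have kb : k <= k / (1 - k ^+ 2).
    rewrite ler_pdivlMr; last by nra.
    nra.
  have ib : (a * c * slow)^-1 <= k.
    have -> : (a * c * slow)^-1 = (eps * qv * slow) / (gamma * slow ^+ 2 * c).
      rewrite /a; field; repeat split; lra.
    have -> : k = (eps * chi * H) / (gamma * slow ^+ 2 * c).
      by rewrite /k /kappa !mulrA.
    apply: ler_wpM2r; first by rewrite invr_ge0 ltW.
    apply: ler_pM; try nra.
  rewrite -exprMn -/k.
  have [e he] := @unit_ex R n n0.
  apply: ge_sup; first by exists (vnorm (invmx X *m e)); exists e.
  move=> x [v /= hv <-].
  set w := invmx X *m v.
  have Xw : X *m w = v by rewrite /w mulmxA mulmxV // mul1mx.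
  have := kX w; rewrite -/X Xw (@vnorm1 R n v hv) => hw.
  have hw2 : sqn w <= ((a * c * slow)^-1) ^+ 2.
    rewrite exprVn -div1r ler_pdivlMr ?exprn_gt0 // mulrC; exact: hw.
  apply: le_trans kb; apply: le_trans ib.
  rewrite /vnorm -/(sqn w).
  apply: le_trans (ler_wsqrtr hw2) _.
  by rewrite sqrtr_sqr ger0_norm // invr_ge0 ltW.
split => //.
move=> delta /andP [d0 d1].
exists (1 / (2 * kappa)); split; first by rewrite divr_gt0 // mulr_gt0.
move=> eps /andP [e0 e1].
have ek : eps * kappa < 1 / 2.
  rewrite -ltr_pdivlMr //; apply: lt_le_trans e1 _.
  have -> : 1 / (2 * kappa) = 1 / 2 / kappa by field; repeat split; lra.
  by [].
have hyp : eps * chi * H < gamma * slow ^+ 2 * c.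
  have -> : eps * chi * H = (eps * kappa) * (gamma * slow ^+ 2 * c).
    rewrite /kappa; field; apply/and3P; split; apply: lt0r_neq0 => //; rewrite exprn_gt0 //.
  rewrite -[ltRHS]mul1r ltr_pM2r //; lra.
set b := eps * kappa / (1 - eps ^+ 2 * kappa ^+ 2).
have ekp : 0 <= eps * kappa by rewrite mulr_ge0 // ltW.
have b0 : 0 <= b.
  rewrite /b divr_ge0 // -exprMn subr_ge0; nra.
have b1 : b < 1.
  rewrite /b -exprMn ltr_pdivrMr; nra.
exists (delta * b); split; first by nra.
move=> t t1; apply: ler_wpM2l => //; exact: P1.
Qed.
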